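(* Let $p$ be a prime, $q=p^n$, $d$ a natural number with $(d,p)=1$, and $r$ a natural number with $r<d$. Then $$M_d^r=-e_{p,r}\,q^{r/p-r/2}+(e_{p,r}-1)q^{-r/2}.$$
   Context: $\mathcal{F}_d$ denotes the set of polynomials $f=\sum_{i=0}^d a_ix^i\in\mathbb{F}_q[x]$ with $a_d\neq 0$ and $a_i=0$ for every $i\ge 0$ divisible by $p$. For a nontrivial additive character $\psi$ of $\mathbb{F}_p$ and $f\in\mathcal{F}_d$, $L_{f,\psi}(z)=\exp\left(\sum_{r\ge1}\sum_{\alpha\in\mathbb{F}_{q^r}}\psi(\mathrm{Tr}_{\mathbb{F}_{q^r}/\mathbb{F}_p}f(\alpha))z^r/r\right)$ factors as $\prod_{i=1}^{d-1}(1-q^{1/2}\rho_iz)$ with $|\rho_i|=1$; $T^r_{f,\psi}=\sum_i\rho_i^r$ and $M_d^r$ is the average of $T^r_{f,\psi}$ over $f\in\mathcal{F}_d$ (independent of $\psi$). $e_{p,r}=1$ if $p\mid r$ and $0$ otherwise. *)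

(* Defs.v *)
From HB Require Import structures.
From mathcomp Require Import all_boot all_order all_algebra all_field.
Set Implicit Arguments. Unset Strict Implicit. Unset Printing Implicit Defensive.
Import Order.TTheory GRing.Theory Num.Theory.
Local Open Scope ring_scope.

Definition abs_trace (L : finFieldType) (p : nat) (y : L) : L :=
  \sum_(i < logn p #|L|) y ^+ (p ^ i).

(* psi(Tr y), where the nontrivial additive character psi of F_p is
   k |-> w^k, w = psi(1) a primitive p-th root of unity; the element
   Tr y of the prime field is identified with the k < p with Tr y = k. *)
Definition addchar (L : finFieldType) (p : nat) (w : algC) (y : L) : algC :=
  w ^+ (match [pick k : 'I_p | abs_trace p y == (k : nat)%:R] with
        | Some k => (k : nat) | None => 0%N end).

(* S_r(f) = sum_{alpha in F_{q^r}} psi(Tr_{F_{q^r}/F_p} f(alpha)),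
   with F_{q^r} := L r and F_q embedded in it via iota r. *)
Definition charsum (F : finFieldType) (p : nat) (w : algC)
  (L : nat -> finFieldType) (iota : forall s, {rmorphism F -> L s})
  (f : {poly F}) (r : nat) : algC :=
  \sum_(x : L r) addchar p w (map_poly (iota r) f).[x].

(* N-th coefficient of the formal power series
   exp(sum_{r>=1} S_r z^r / r) = sum_m A^m / m!  (only A truncated at
   degree N and m <= N contribute to the coefficient of z^N). *)
Definition Lcoef (F : finFieldType) (p : nat) (w : algC)
  (L : nat -> finFieldType) (iota : forall s, {rmorphism F -> L s})
  (f : {poly F}) (N : nat) : algC :=
  let A : {poly algC} :=
    \sum_(1 <= r < N.+1) (charsum p w iota f r / r%:R) *: 'X^r in
  \sum_(m < N.+1) (A ^+ m)`_N / (m`!)%:R.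

Definition Fd (F : finFieldType) (p d : nat) : {set {ffun 'I_d.+1 -> F}} :=
  [set a : {ffun 'I_d.+1 -> F} | (a ord_max != 0) && [forall i : 'I_d.+1, (p %| i)%N ==> (a i == 0)]].

Definition poly_of (F : finFieldType) (d : nat) (a : {ffun 'I_d.+1 -> F}) : {poly F} :=
  \poly_(i < d.+1) a (inord i).

Definition Tsum (k : nat) (rho : 'I_k -> algC) (r : nat) : algC :=
  \sum_(i < k) rho i ^+ r.

(* Main.v *)
Require Import Defs.
From HB Require Import structures.
From mathcomp Require Import all_boot all_order all_algebra all_field.
From mathcomp Require Import zify ring.
Import Order.TTheory GRing.Theory Num.Theory.
Local Open Scope ring_scope.
Section ExpPart.
Variable s : nat -> algC.

Definition Apoly (M : nat) : {poly algC} :=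
  \sum_(1 <= r < M.+1) (s r / r%:R) *: 'X^r.

Definition ell (N : nat) : algC :=
  \sum_(m < N.+1) (Apoly N ^+ m)`_N / (m`!)%:R.

Lemma coefA M i : (Apoly M)`_i = if (0 < i <= M)%N then s i / i%:R else 0.
Proof.
rewrite /Apoly coef_sum.
rewrite (eq_bigr (fun k => if k == i then s k / k%:R else 0)); last first.
  by move=> k _; rewrite coefZ coefXn eq_sym; case: eqP; rewrite ?mulr1 ?mulr0.
by rewrite -big_mkcond big_nat1_eq.
Qed.

Lemma agree_exp (P Q : {poly algC}) j :
  (forall i, (i <= j)%N -> P`_i = Q`_i) ->
  forall m i, (i <= j)%N -> (P ^+ m)`_i = (Q ^+ m)`_i.
Proof.
move=> H; elim=> [|m IH] i hi; first by rewrite !expr0.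
rewrite !exprS !coefM; apply: eq_bigr => k _.
have hk : (k <= j)%N by apply: leq_trans hi; rewrite -ltnS.
rewrite H // IH //; apply: leq_trans hi; exact: leq_subr.
Qed.

Lemma low0 (P : {poly algC}) : P`_0 = 0 ->
  forall m i, (i < m)%N -> (P ^+ m)`_i = 0.
Proof.
move=> H0; elim=> [|m IH] i //.
move=> hi; rewrite exprS coefM big1 // => k _.
case: k => [[|k] hk] /=; first by rewrite H0 mul0r.
rewrite IH ?mulr0 //; lia.
Qed.

Lemma A0 M : (Apoly M)`_0 = 0.
Proof. by rewrite coefA. Qed.

Lemma ell_coef M K j : (j <= M)%N -> (j < K)%N ->
  \sum_(m < K) (Apoly M ^+ m)`_j / (m`!)%:R = ell j.
Proof.
move=> hj hK; rewrite /ell.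
rewrite (big_ord_widen K (fun m => (Apoly j ^+ m)`_j / (m`!)%:R)) //.
rewrite [RHS]big_mkcond /=; apply: eq_bigr => m _.
rewrite (@agree_exp (Apoly M) (Apoly j) j); last by [].
  case: ifP => // hm; rewrite low0 ?A0 ?mul0r //; by rewrite ltnNge -ltnS hm.
move=> i hi; rewrite !coefA; case: (0 < i)%N => //=.
by rewrite hi (leq_trans hi hj).
Qed.

Lemma ell_rec N : (N.+1)%:R * ell N.+1 = \sum_(k < N.+1) s k.+1 * ell (N - k).
Proof.
set A := Apoly N.+1.
set G := \sum_(m < N.+2) ((m`!)%:R^-1) *: A ^+ m.
have ellG : ell N.+1 = G`_N.+1.
  by rewrite /ell coef_sum; apply: eq_bigr => m _; rewrite coefZ mulrC.
have dG : G^`() = A^`() * \sum_(m < N.+1) ((m`!)%:R^-1) *: A ^+ m.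
  rewrite raddf_sum big_ord_recl /= derivZ deriv_exp mulr0n scaler0 add0r mulr_sumr.
  apply: eq_bigr => m _; rewrite derivZ deriv_exp /= factS natrM invfM.
  rewrite -scalerAr -scaler_nat scalerA; congr (_ *: _).
  rewrite mulrAC mulVf ?mul1r // pnatr_eq0 //.
rewrite ellG mulr_natl -coef_deriv dG coefM; apply: eq_bigr => k _.
rewrite coef_deriv coefA /= ltn_ord.
have -> : s k.+1 / k.+1%:R *+ k.+1 = s k.+1 by rewrite -[RHS](@divfK _ k.+1%:R) ?pnatr_eq0 // mulr_natr.
congr (_ * _); rewrite coef_sum -(@ell_coef N.+1 N.+1 (N - k)); [|lia|lia].
by apply: eq_bigr => m _; rewrite coefZ mulrC.
Qed.

End ExpPart.
Lemma deriv_prod_seq (R : comNzRingType) (I : eqType) (r : seq I) (f : I -> {poly R}) :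
  uniq r ->
  (\prod_(i <- r) f i)^`() = \sum_(i <- r) (f i)^`() * \prod_(j <- r | j != i) f j.
Proof.
elim: r => [|a r IH] /=; first by rewrite !big_nil derivC.
case/andP=> anr ur.
rewrite !big_cons derivM IH // eqxx /=.
have -> : \prod_(j <- r | j != a) f j = \prod_(j <- r) f j.
  rewrite big_seq_cond [RHS]big_seq; apply: eq_bigl => j.
  by case jr: (j \in r) => //=; apply/eqP => ja; rewrite -ja jr in anr.
rewrite mulr_sumr; congr (_ + _).
rewrite [LHS]big_seq [RHS]big_seq; apply: eq_bigr => i ir.
have ia : (a != i) by apply/eqP => ai; rewrite ai ir in anr.
by rewrite big_cons ia mulrCA.
Qed.

Lemma deriv_prod (R : comNzRingType) (I : finType) (f : I -> {poly R}) :
  (\prod_i f i)^`() = \sum_i (f i)^`() * \prod_(j | j != i) f j.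
Proof.
by rewrite deriv_prod_seq // index_enum_uniq.
Qed.

Section ProdPart.
Variables (K : nat) (c : 'I_K -> algC).

Definition Pp : {poly algC} := \prod_(i < K) (1 - c i *: 'X).
Definition pw k := \sum_(i < K) c i ^+ k.

Lemma Pp_rec N : (N.+1)%:R * Pp`_N.+1 = - \sum_(k < N.+1) pw k.+1 * Pp`_(N - k).
Proof.
set Pi := fun i : 'I_K => \prod_(j < K | j != i) (1 - c j *: 'X).
have dP : Pp^`() = - \sum_i c i *: Pi i.
  rewrite /Pp deriv_prod -sumrN; apply: eq_bigr => i _.
  by rewrite derivB derivC derivZ derivX sub0r mulNr -scalerAl mul1r.
have key : forall i, (c i *: Pi i)`_N = \sum_(k < N.+1) c i ^+ k.+1 * Pp`_(N - k).
  move=> i.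
  set U : {poly algC} := \poly_(k < N.+1) (c i ^+ k).
  have hU : (1 - c i *: 'X) * U = 1 - (c i *: 'X) ^+ N.+1.
    rewrite -[RHS]opprB subrX1 -mulNr opprB /U poly_def; congr (_ * _).
    by apply: eq_bigr => k _; rewrite exprZn.
  have hP : Pp = (1 - c i *: 'X) * Pi i by rewrite /Pp (bigD1 i).
  have -> : c i *: Pi i = c i *: (Pp * U) + c i *: (Pi i * (c i *: 'X) ^+ N.+1).
    by rewrite -scalerDr hP mulrAC hU mulrBl mul1r [_ * Pi i]mulrC subrK.
  rewrite coefD !coefZ exprZn -scalerAr coefZ coefMXn ltnSn !mulr0 addr0.
  rewrite coefMr mulr_sumr; apply: eq_bigr => k _.
  by rewrite coef_poly ltn_ord exprS [Pp`_ _ * _]mulrC mulrA.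
rewrite mulr_natl -coef_deriv dP coefN coef_sum; congr (- _).
under eq_bigr do rewrite key.
rewrite exchange_big /=; apply: eq_bigr => k _.
by rewrite /pw mulr_suml.
Qed.

End ProdPart.
Arguments Pp {K}.
Arguments pw {K}.
Arguments Pp_rec {K}.

Lemma ell0 s : ell s 0 = 1.
Proof. by rewrite /ell big_ord1 expr0 coefC /= divr1. Qed.

Lemma newton_unique (s : nat -> algC) (K : nat) (c : 'I_K -> algC) :
  (forall N, ell s N = (Pp c)`_N) -> forall N, (0 < N)%N -> s N = - pw c N.
Proof.
move=> H N; elim/ltn_ind: N => [[|N]] // IH _.
have e1 := ell_rec s N; have e2 := Pp_rec c N.
rewrite H e2 in e1.
move: e1; rewrite big_ord_recr [in RHS]big_ord_recr /= subnn -H ell0 !mulr1 => e1.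
have e3 : \sum_(k<N) s k.+1 * ell s (N - k) = \sum_(k<N) - pw c k.+1 * (Pp c)`_(N-k).
  by apply: eq_bigr => k _; rewrite IH -?H ?mulNr // ltnS.
rewrite e3 opprD -sumrN in e1.
move: e1; under eq_bigr do rewrite -mulNr.
by move/addrI.
Qed.
Set Implicit Arguments. Unset Strict Implicit.
Section Frob.
Variables (p : nat) (L : finFieldType).
Hypothesis pL : p \in [pchar L].

Lemma pnat_pk k : [pchar L].-nat (p ^ k)%N.
Proof.
rewrite (eq_pnat _ (pcharf_eq pL)) pnatX pnat_id ?orbT //.
exact: pcharf_prime pL.
Qed.

Lemma frobD k (y z : L) : (y + z) ^+ (p ^ k) = y ^+ (p ^ k) + z ^+ (p ^ k).
Proof. exact: exprDn_pchar (pnat_pk k). Qed.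

Lemma frob0 k : (0 : L) ^+ (p ^ k) = 0.
Proof. by rewrite expr0n expn_eq0 eqn0Ngt (prime_gt0 (pcharf_prime pL)). Qed.

Lemma frob_sum k (I : Type) (r : seq I) (P : pred I) (F : I -> L) :
  (\sum_(i <- r | P i) F i) ^+ (p ^ k) = \sum_(i <- r | P i) F i ^+ (p ^ k).
Proof.
exact: (big_morph (fun x => x ^+ (p ^ k)) (frobD k) (frob0 k)).
Qed.

Lemma natr_inj_lt a b : (a < p)%N -> (b < p)%N -> a%:R = b%:R :> L -> a = b.
Proof.
have pp := pcharf_prime pL.
wlog le : a b / (a <= b)%N.
  move=> H ha hb e; case: (leqP a b) => h; first exact: H.
  by symmetry; apply: H => //; apply: ltnW.
move=> ha hb e.
have : (p %| b - a)%N by rewrite (dvdn_pcharf pL) natrB // e subrr.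
case: (posnP (b - a)) => [h0 _|hpos /(dvdn_leq hpos) hle]; lia.
Qed.

End Frob.

Section Trace.
Variables (p : nat) (L : finFieldType) (m : nat).
Hypotheses (pr : prime p) (cardL : #|L| = (p ^ m)%N).

Let pL : p \in [pchar L] := card_finPcharP cardL pr.

Local Notation AT := (abs_trace p).

Lemma ATE (y : L) : AT y = \sum_(i < m) y ^+ (p ^ i).
Proof. by rewrite /abs_trace cardL pfactorK. Qed.

Lemma AT_add (y z : L) : AT (y + z) = AT y + AT z.
Proof. by rewrite !ATE -big_split; apply: eq_bigr => i _; rewrite (frobD pL). Qed.

Lemma AT_0 : AT (0 : L) = 0.
Proof. by rewrite ATE big1 // => i _; rewrite (frob0 pL). Qed.

Lemma AT_frob (y : L) : AT y ^+ p = AT y.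
Proof.
have := frob_sum pL 1 (index_enum 'I_m) xpredT (fun i : 'I_m => y ^+ (p ^ i)).
rewrite expn1 -!ATE => ->.
have [m' em] : exists m', m = m'.+1.
  case: (m) cardL => [|m'] cL; last by exists m'.
  by have := finNzRing_gt1 L; rewrite cL.
rewrite ATE em big_ord_recr big_ord_recl /=.
rewrite -exprM -expnSr -em -cardL expf_card expn0 expr1 addrC.
by congr (_ + _); apply: eq_bigr => i _; rewrite -exprM -expnSr.
Qed.

Lemma AT_nat (y : L) : exists k : 'I_p, AT y = (k : nat)%:R.
Proof.
suff /existsP [k /eqP hk] : [exists k : 'I_p, AT y == (k : nat)%:R] by exists k.
case: (boolP [exists k : 'I_p, AT y == (k : nat)%:R]) => [//|].
rewrite negb_exists => /forallP H; exfalso.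
set P : {poly L} := 'X^p - 'X.
have p2 := prime_gt1 pr.
have sP : size P = p.+1.
  rewrite /P size_addl ?size_polyXn // size_opp size_polyX; lia.
have P0 : P != 0 by rewrite -size_poly_eq0 sP.
have rootP z : z ^+ p = z -> root P z.
  by move=> hz; rewrite /root /P !hornerE hz subrr.
set rs := AT y :: [seq (k%:R : L) | k <- iota 0 p].
have := max_poly_roots P0 (rs := rs).
rewrite sP /rs /= size_map size_iota ltnn => h; suff : false by []; apply: h.
  apply/andP; split; first by apply: rootP; exact: AT_frob.
  apply/allP => z /mapP [k _ ->]; apply: rootP.
  by have := pFrobenius_aut_nat pL k; rewrite pFrobenius_autE.
apply/andP; split.
  apply/mapP => [[k]]; rewrite mem_iota add0n => /andP [_ hk] e.
  by have := H (Ordinal hk); rewrite e eqxx.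
rewrite map_inj_in_uniq ?iota_uniq // => a b.
rewrite !mem_iota !add0n => /andP [_ ha] /andP [_ hb].
exact: natr_inj_lt pL a b ha hb.
Qed.

Variable w : algC.
Hypothesis wprim : p.-primitive_root w.

Lemma psi_val (y : L) k : AT y = k%:R -> addchar p w y = w ^+ k.
Proof.
move=> hk; rewrite /addchar; case: pickP => [k' /eqP hk' | H0] /=.
  have e : (k' : nat) = (k %% p)%N.
    apply: (natr_inj_lt pL); first exact: ltn_ord.
      by rewrite ltn_mod prime_gt0.
    by rewrite (GRing.natr_mod_pchar pL) -hk' hk.
  by rewrite e (prim_expr_mod wprim).
have := H0 (Ordinal (ltn_pmod k (prime_gt0 pr))); rewrite /= (GRing.natr_mod_pchar pL).
by rewrite hk eqxx.
Qed.

Lemma psi_add (y z : L) : addchar p w (y + z) = addchar p w y * addchar p w z.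
Proof.
have [k1 h1] := AT_nat y; have [k2 h2] := AT_nat z.
rewrite (psi_val h1) (psi_val h2) (@psi_val _ (k1 + k2)) ?exprD //.
by rewrite AT_add h1 h2 natrD.
Qed.

Lemma psi_0 : addchar p w (0 : L) = 1.
Proof. by rewrite (@psi_val _ 0) ?expr0 // AT_0. Qed.

Lemma psi_eq1 (y : L) : (addchar p w y == 1) = (AT y == 0).
Proof.
have [k h] := AT_nat y; rewrite (psi_val h) h -(prim_order_dvd wprim).
by rewrite (dvdn_pcharf pL).
Qed.

Section CS.
Variables (F : finFieldType) (iota : {rmorphism F -> L}).

Definition Cond (y : L) := [forall a : F, AT (iota a * y) == 0].

Lemma charsum_F (y : L) :
  \sum_(a : F) addchar p w (iota a * y) = if Cond y then #|F|%:R else 0.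
Proof.
case: ifP => hC.
  rewrite (eq_bigr (fun _ => 1)) ?sumr_const //.
  by move=> a _; apply/eqP; rewrite psi_eq1; move/forallP: hC.
move/negbT/forallPn: hC => [a0 ha0].
have : \sum_(a : F) addchar p w (iota a * y) =
    addchar p w (iota a0 * y) * \sum_(a : F) addchar p w (iota a * y).
  rewrite [LHS](reindex_inj (addIr a0)) /= mulr_sumr; apply: eq_bigr => a _.
  by rewrite rmorphD mulrDl psi_add mulrC.
set S := \sum_(a : F) _.
move/eqP; rewrite -subr_eq0 -{1}(mul1r S) -mulrBl mulf_eq0 subr_eq0 eq_sym.
by rewrite psi_eq1 (negbTE ha0) /= => /eqP.
Qed.

End CS.
End Trace.
Lemma sum_periodic (R : nmodType) (f : nat -> R) s u :
  (forall j, f (j + s)%N = f j) -> \sum_(j < u * s) f j = (\sum_(j < s) f j) *+ u.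
Proof.
move=> hf; elim: u => [|u IH]; first by rewrite mul0n big_ord0 mulr0n.
rewrite mulSn big_split_ord /= mulrS -IH; congr (_ + _).
by apply: eq_bigr => i _; rewrite addnC hf.
Qed.

Lemma sum_mul_split (R : nmodType) n r (f : nat -> R) :
  \sum_(k < n * r) f k = \sum_(j < r) \sum_(l < n) f (j * n + l)%N.
Proof.
elim: r f => [|r IH] f; first by rewrite muln0 !big_ord0.
rewrite mulnS big_split_ord big_ord_recl /= (IH (fun i => f (n + i)%N)).
congr (_ + _).
apply: eq_bigr => j _; apply: eq_bigr => l _.
by rewrite /bump /= add1n mulSn addnA.
Qed.

Lemma htrick (K : fieldType) s (y : nat -> K) : (0 < s)%N ->
  (forall i j, (i < s)%N -> (j < s)%N -> y i = y j -> i = j) ->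
  (forall i, (0 < i <= s)%N -> \sum_(j < s) y j ^+ i = 0) -> y 0%N = 0.
Proof.
move=> s0 yinj hsum; apply/eqP/negP => /negP y00.
set rs := [seq y j | j <- iota 1 s.-1].
set h : {poly K} := 'X * \prod_(z <- rs) ('X - z%:P).
have sh : (size h <= s.+1)%N.
  rewrite /h mulrC size_mulX ?size_prod_XsubC /rs ?size_map ?size_iota; first lia.
  by rewrite -size_poly_eq0 size_prod_XsubC.
have h0 : h`_0 = 0 by rewrite /h coefXM.
have hroot j : (0 < j < s)%N -> h.[y j] = 0.
  move=> /andP [j0 js]; rewrite /h hornerM.
  have : root (\prod_(z <- rs) ('X - z%:P)) (y j).
    rewrite root_prod_XsubC /rs; apply/mapP; exists j => //.
    rewrite mem_iota; lia.
  by move/eqP => ->; rewrite mulr0.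
have hy0 : h.[y 0%N] != 0.
  rewrite /h hornerM hornerX mulf_neq0 //.
  rewrite -/(root _ _) root_prod_XsubC /rs; apply/mapP => [[j]].
  rewrite mem_iota => hj e; have := yinj 0%N j s0 _ e; lia.
have : \sum_(j < s) h.[y j] = h.[y 0%N].
  rewrite (bigD1 (Ordinal s0)) //= big1 ?addr0 // => j hj; apply: hroot.
  rewrite ltn_ord andbT lt0n; apply: contra hj => /eqP j0.
  by apply/eqP; apply: val_inj.
suff -> : \sum_(j < s) h.[y j] = 0 by move=> e; rewrite -e eqxx in hy0.
under eq_bigr do rewrite (horner_coef_wide _ sh).
rewrite exchange_big big_ord_recl /= h0 big1 ?add0r; last by move=> i _; rewrite mul0r.
rewrite big1 // => i _; rewrite -mulr_sumr hsum ?mulr0 //.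
by rewrite /bump /= add1n ltn_ord.
Qed.

Lemma pnat_pk' (L : nzRingType) p k : p \in [pchar L] -> [pchar L].-nat (p ^ k)%N.
Proof.
move=> pL; rewrite (eq_pnat _ (pcharf_eq pL)) pnatX pnat_id ?orbT //.
exact: pcharf_prime pL.
Qed.

Lemma size_XnsubX (L : fieldType) Q : (1 < Q)%N -> size ('X^Q - 'X : {poly L}) = Q.+1.
Proof.
move=> hQ; rewrite size_addl ?size_polyXn // size_opp size_polyX; lia.
Qed.

Lemma card_subfield (L : finFieldType) p e k :
  p \in [pchar L] -> (0 < e)%N -> (0 < k)%N -> #|L| = ((p ^ e) ^ k)%N ->
  #|[pred x : L | x ^+ (p ^ e) == x]| = (p ^ e)%N.
Proof.
move=> pL e0 k0 cL.
have pp := pcharf_prime pL.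
set Q := (p ^ e)%N.
have Q1 : (1 < Q)%N by rewrite /Q -{1}(expn0 p) ltn_exp2l ?prime_gt1.
have QQk : (Q <= Q ^ k)%N by rewrite -{1}(expn1 Q) leq_pexp2l //; lia.
set A := [pred x : L | x ^+ Q == x].
set E : {poly L} := 'X^Q - 'X.
have sE : size E = Q.+1 by apply: size_XnsubX.
have E0 : E != 0 by rewrite -size_poly_eq0 sE.
have up : (#|A| < Q.+1)%N.
  rewrite -sE cardE; apply: max_poly_roots => //; last exact: enum_uniq.
  apply/allP => z; rewrite mem_enum /A /= => /eqP hz.
  by rewrite /root /E !hornerE hz subrr.
have pP : p \in [pchar {poly L}] by rewrite pchar_poly.
have fQ j (a b : {poly L}) : (a - b) ^+ (Q ^ j) = a ^+ (Q ^ j) - b ^+ (Q ^ j).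
  have hn : [pchar {poly L}].-nat (Q ^ j)%N by rewrite /Q -expnM; exact: pnat_pk'.
  by rewrite exprDn_pchar // exprNn_pchar.
set H := \sum_(j < k) E ^+ (Q ^ j - 1).
have tel : 'X^(Q ^ k) - 'X = E * H.
  rewrite /H mulr_sumr.
  rewrite (eq_bigr (fun j : 'I_k => 'X^(Q ^ j.+1) - 'X^(Q ^ j))); last first.
    move=> j _; rewrite -exprS subn1 prednK; last by rewrite expn_gt0 (ltnW Q1).
    by rewrite /E fQ -exprM -expnS.
  rewrite -(big_mkord xpredT (fun j => 'X^(Q ^ j.+1) - 'X^(Q ^ j))).
  by rewrite telescope_sumr // expn0.
have sX : size ('X^(Q ^ k) - 'X : {poly L}) = (Q ^ k).+1 by apply: size_XnsubX; lia.
have H0 : H != 0.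
  by apply/eqP => h; move: sX; rewrite tel h mulr0 size_poly0.
have sH : size H = (Q ^ k - Q).+1.
  move: sX; rewrite tel size_mul // sE; move: QQk; move: (Q ^ k)%N (size H) => m sH. clearbody Q. intros; lia.
have down : (#|[predC A]| < size H)%N.
  rewrite cardE; apply: max_poly_roots => //; last exact: enum_uniq.
  apply/allP => z; rewrite mem_enum /A /= => hz.
  have : ('X^(Q ^ k) - 'X).[z] = 0.
    by rewrite !hornerE -cL expf_card subrr.
  rewrite tel hornerM => /eqP; rewrite mulf_eq0 => /orP [hE|hH]; last exact: hH.
  by move: hE hz; rewrite /E !hornerE subr_eq0 => hh /negP [].
have := cardC A; rewrite cL -/Q; move: up down sH QQk; move: (#|A|) (#|[predC A]|) (size H) (Q ^ k)%N => a b c m; clearbody Q; intros; lia.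
Qed.
Section Main.
Variables (p n r : nat) (F L : finFieldType) (iota : {rmorphism F -> L}).
Hypotheses (pr : prime p) (cF : #|F| = (p ^ n)%N) (cL : #|L| = ((p ^ n) ^ r)%N)
  (r0 : (0 < r)%N).

Local Notation q := (p ^ n)%N.

Lemma cL' : #|L| = (p ^ (n * r))%N.
Proof. by rewrite cL -expnM. Qed.

Let pL : p \in [pchar L] := card_finPcharP cL' pr.

Lemma n0 : (0 < n)%N.
Proof.
case: n cF => // cF0; by have := finNzRing_gt1 F; rewrite cF0.
Qed.

Definition RT (y : L) := \sum_(j < r) y ^+ (q ^ j).

Lemma iota_fix a j : iota a ^+ (q ^ j) = iota a.
Proof.
elim: j => [|j IH]; first by rewrite expn0 expr1.
by rewrite expnS mulnC exprM IH -rmorphXn -cF expf_card.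
Qed.

Lemma AT_decomp a y :
  abs_trace p (iota a * y) = \sum_(l < n) (iota a * RT y) ^+ (p ^ l).
Proof.
rewrite (ATE pr cL') (sum_mul_split n r (fun k => (iota a * y) ^+ (p ^ k))).
rewrite exchange_big /=; apply: eq_bigr => l _.
rewrite /RT mulr_sumr (frob_sum pL); apply: eq_bigr => j _.
by rewrite expnD [(j * n)%N]mulnC expnM exprM exprMn iota_fix.
Qed.

Lemma RT_frob y : RT (y ^+ p) = RT y ^+ p.
Proof.
have := frob_sum pL 1 (index_enum 'I_r) xpredT (fun j : 'I_r => y ^+ (q ^ j)).
by rewrite expn1 /RT => ->; apply: eq_bigr => j _; rewrite exprAC.
Qed.

Lemma Cond_RT y : Cond p iota y -> RT y = 0.
Proof.
move=> hC; apply/eqP/negP => /negP T0.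
have n1 := n0.
have p1 := prime_gt1 pr.
set g : {poly L} := \sum_(l < n) 'X^(p ^ l).
have g1 : g`_1 = 1.
  rewrite /g coef_sum; case: n n1 => // n' _.
  rewrite big_ord_recl /= expn0 coefXn eqxx big1 ?addr0 // => l _.
  rewrite coefXn /bump /= add1n eq_sym; case: eqP => // e.
  by have := ltn_exp2l 0 l.+1 p1; rewrite expn0 e ltnn.
have g0 : g != 0 by apply/eqP => g0; move: g1; rewrite g0 coef0 => /eqP; rewrite eq_sym oner_eq0.
have sg : (size g <= (p ^ n.-1).+1)%N.
  apply: leq_trans (size_sum _ _ _) _; apply/bigmax_leqP => l _.
  rewrite size_polyXn ltnS leq_pexp2l ?prime_gt0 //; have := ltn_ord l; lia.
have := max_poly_roots g0 (rs := [seq iota a * RT y | a <- enum F]).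
rewrite size_map -cardE cF.
have -> : (q < size g)%N = false.
  apply/negbTE; rewrite -leqNgt; apply: leq_trans sg _.
  case: n n1 => // n' _; rewrite expnS /=.
  have : (0 < p ^ n')%N by rewrite expn_gt0 prime_gt0.
  nia.
move=> h; suff : false by []; apply: h.
  apply/allP => z /mapP [a _ ->].
  rewrite /root /g horner_sum; apply/eqP.
  rewrite (eq_bigr (fun l : 'I_n => (iota a * RT y) ^+ (p ^ l))); last by move=> l _; rewrite hornerXn.
  by rewrite -(AT_decomp a y); apply/eqP; exact: (forallP hC a).
rewrite map_inj_uniq ?enum_uniq // => a b.
by move/(mulIf T0)/fmorph_inj.
Qed.


Lemma RT0_all x d :
  (forall i, (0 < i < d)%N -> ~~ (p %| i)%N -> Cond p iota (x ^+ i)) ->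
  forall i, (0 < i < d)%N -> RT (x ^+ i) = 0.
Proof.
move=> hC; elim/ltn_ind => i IH /andP [i0 id].
case: (boolP (p %| i)%N) => hp; last by apply: Cond_RT; apply: hC; rewrite ?i0.
have p1 := prime_gt1 pr.
have [i' ei] : exists i', i = (i' * p)%N by exists (i %/ p)%N; rewrite divnK.
have i'0 : (0 < i')%N by move: i0; rewrite ei muln_gt0 => /andP [].
have i'i : (i' < i)%N by rewrite ei -{1}(muln1 i') ltn_pmul2l.
rewrite ei exprM RT_frob IH //; first by rewrite expr0n eqn0Ngt prime_gt0.
by rewrite i'0 (ltn_trans i'i id).
Qed.

Definition Wp (x : L) : bool :=
  if (p %| r)%N then x ^+ (q ^ (r %/ p)) == x else x == 0.

Lemma V_sub_W x d : (r < d)%N ->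
  (forall i, (0 < i < d)%N -> ~~ (p %| i)%N -> Cond p iota (x ^+ i)) -> Wp x.
Proof.
move=> rd hC; have R0 := RT0_all hC.
have xq : x ^+ (q ^ r) = x by rewrite -cL expf_card.
have [s /andP [s0 /eqP xs] smin] :=
  find_ex_minn (ex_intro (fun s => (0 < s)%N && (x ^+ (q ^ s) == x)) r
    (introT andP (conj r0 (introT eqP xq)))).
have per1 j : x ^+ (q ^ (j + s)) = x ^+ (q ^ j).
  by rewrite expnD mulnC exprM xs.
have perm j : x ^+ (q ^ j) = x ^+ (q ^ (j %% s)).
  rewrite {1}(divn_eq j s); elim: (j %/ s)%N => [|u IH]; first by rewrite mul0n add0n.
  by rewrite mulSn -addnA addnC per1.
have sr : (s %| r)%N.
  rewrite /dvdn -leqn0 leqNgt; apply/negP => h.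
  have := smin (r %% s)%N; rewrite h -perm xq eqxx => /(_ isT).
  by rewrite leqNgt ltn_mod s0.
have hlp a b : (x ^+ (q ^ a)) ^+ (q ^ b) = x ^+ (q ^ (a + b)) by rewrite -exprM -expnD.
have key i j : (j < i)%N -> (i < s)%N -> x ^+ (q ^ i) = x ^+ (q ^ j) -> False.
  move=> ji hi e.
  have : x ^+ (q ^ (j + (s - i))) = x.
    by rewrite -hlp -e hlp subnKC ?xs // ltnW.
  move/eqP => h; have := smin (j + (s - i))%N; rewrite h andbT.
  have hp : (0 < j + (s - i))%N by lia.
  move=> /(_ hp); lia.
have inj i j : (i < s)%N -> (j < s)%N -> x ^+ (q ^ i) = x ^+ (q ^ j) -> i = j.
  move=> hi js e; case: (ltngtP i j) => // h.
    by case: (key j i h js (esym e)).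
  by case: (key i j h hi e).
set u := (r %/ s)%N.
have ru : r = (u * s)%N by rewrite divnK.
have RTu i : RT (x ^+ i) = (\sum_(j < s) (x ^+ (q ^ j)) ^+ i) *+ u.
  rewrite /RT [in LHS]ru (@sum_periodic _ (fun j => (x ^+ i) ^+ (q ^ j))).
    by congr (_ *+ _); apply: eq_bigr => j _; rewrite exprAC.
  by move=> j /=; rewrite !(exprAC _ i) per1.
case: (boolP (p %| u)%N) => pu.
  have pr' : (p %| r)%N by rewrite ru dvdn_mulr.
  rewrite /Wp pr' ru -divn_mulAC // perm modnMl expn0 expr1 //.
have u0 : (u%:R : L) != 0 by rewrite -(dvdn_pcharf pL).
have sd : (s < d)%N by apply: leq_ltn_trans rd; apply: dvdn_leq.
have x0 : x = 0.
  have := htrick (y := fun j => x ^+ (q ^ j)) s0 inj.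
  rewrite expn0 expr1; apply => i /andP [i0 hi].
  have := R0 i; rewrite i0 (leq_ltn_trans hi sd) RTu => /(_ isT) /eqP.
  by rewrite -mulr_natr mulf_eq0 (negbTE u0) orbF => /eqP.
rewrite /Wp x0 eqxx; case: ifP => // _.
by rewrite expr0n expn_eq0 eqn0Ngt expn_gt0 prime_gt0.
Qed.

Lemma W_cond x i : (0 < i)%N -> Wp x -> Cond p iota (x ^+ i).
Proof.
move=> i0; rewrite /Wp; case: ifP => hpr.
  move/eqP => xt; set t := (r %/ p)%N; apply/forallP => a.
  set z := iota a * x ^+ i.
  have zt : z ^+ (q ^ t) = z by rewrite /z exprMn iota_fix exprAC xt.
  have e : (n * r = p * (n * t))%N by rewrite /t mulnCA [(p * _)%N]mulnC divnK.
  rewrite (ATE pr cL') e (@sum_periodic _ (fun k => z ^+ (p ^ k))).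
    by rewrite (GRing.mulrn_pchar pL).
  by move=> k /=; rewrite expnD mulnC exprM expnM zt.
move/eqP => ->; apply/forallP => a.
by rewrite expr0n eqn0Ngt i0 mulr0 (AT_0 pr cL').
Qed.

Lemma card_W : #|[pred x : L | Wp x]| = if (p %| r)%N then (q ^ (r %/ p))%N else 1%N.
Proof.
rewrite /Wp; case: ifP => hpr.
  have t0 : (0 < r %/ p)%N by rewrite divn_gt0 ?prime_gt0 // dvdn_leq.
  rewrite -expnM; apply: (card_subfield (k := p) pL).
  - by rewrite muln_gt0 n0 t0.
  - exact: prime_gt0.
  - by rewrite cL' -expnM -mulnA divnK.
by rewrite -(card1 (0 : L)); apply: eq_card => x; rewrite !inE.
Qed.

End Main.

Unset Implicit Arguments. Set Strict Implicit.

Theorem corollary1 (p n d r : nat) (F : finFieldType)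
  (L : nat -> finFieldType) (iota : forall s, {rmorphism F -> L s})
  (w : algC) (rho : {poly F} -> 'I_d.-1 -> algC) :
  prime p -> #|F| = (p ^ n)%N -> coprime d p ->
  (0 < r)%N -> (r < d)%N ->
  (forall s, (0 < s)%N -> #|L s| = ((p ^ n) ^ s)%N) ->
  p.-primitive_root w ->
  (forall a, a \in Fd F p d -> forall N : nat,
      Lcoef p w iota (poly_of a) N =
      (\prod_(i < d.-1) (1 - (sqrtC (p ^ n)%:R * rho (poly_of a) i) *: 'X))`_N) ->
  (\sum_(a in Fd F p d) Tsum (rho (poly_of a)) r) / #|Fd F p d|%:R =
  - (p %| r)%:R * ((p ^ n)%:R ^+ (r %/ p) / sqrtC (p ^ n)%:R ^+ r)
  + ((p %| r)%:R - 1) / sqrtC (p ^ n)%:R ^+ r.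
Proof.
move=> pr cF cop r0 rd cLs wprim hL.
set q := (p ^ n)%N.
set sq := sqrtC (q%:R : algC).
have q0 : (0 < q)%N by rewrite expn_gt0 prime_gt0.
have sq0 : sq != 0 by rewrite sqrtC_eq0 pnatr_eq0 -lt0n.
set S := fun a : {ffun 'I_d.+1 -> F} => charsum p w iota (poly_of a) r.
have hT : forall a, a \in Fd F p d -> Tsum (rho (poly_of a)) r = - S a / sq ^+ r.
  move=> a Ha.
  have := newton_unique (fun k => charsum p w iota (poly_of a) k) d.-1
     (fun i => sq * rho (poly_of a) i) (fun N => hL a Ha N) r r0.
  rewrite /S => ->; rewrite /pw /Tsum opprK.
  rewrite [in RHS](eq_bigr (fun i : 'I_d.-1 => sq ^+ r * rho (poly_of a) i ^+ r)); last by move=> i _; rewrite exprMn.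
  by rewrite -mulr_sumr mulrC mulKf // expf_neq0.
have cL := cLs r r0.
have cL' : #|L r| = (p ^ (n * r))%N by rewrite cL -expnM.
pose Q (i : 'I_d.+1) : pred F := fun b => ((p %| i)%N ==> (b == 0)) && ((i == ord_max) ==> (b != 0)).
have FdQ : forall a : {ffun 'I_d.+1 -> F}, (a \in Fd F p d) = (a \in family Q).
  move=> a; rewrite /Fd inE; apply/andP/familyP.
    move=> [h1 /forallP h2] i; rewrite /Q unfold_in /=; apply/andP; split; first exact: h2.
    by apply/implyP => /eqP ->.
  move=> h; split; first by have := h ord_max; rewrite /Q unfold_in /= eqxx /= => /andP [].
  by apply/forallP => i; have := h i; rewrite /Q unfold_in /= => /andP [].
pose G (x : L r) (i : 'I_d.+1) (b : F) := addchar p w (iota r b * x ^+ i).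
have evalS : forall a, S a = \sum_(x : L r) \prod_(i < d.+1) G x i (a i).
  move=> a; rewrite /S /charsum; apply: eq_bigr => x _.
  have sz : (size (map_poly (iota r) (poly_of a)) <= d.+1)%N.
    by rewrite size_map_poly /poly_of; apply: size_poly.
  rewrite (horner_coef_wide _ sz).
  rewrite (big_morph (addchar p w) (psi_add pr cL' wprim) (psi_0 pr cL' wprim)).
  apply: eq_bigr => i _; rewrite coef_map /poly_of coef_poly ltn_ord inord_val //.
have sumS : \sum_(a in Fd F p d) S a =
    \sum_(x : L r) \prod_(i < d.+1) \sum_(b | Q i b) G x i b.
  rewrite (eq_bigr _ (fun a _ => evalS a)) exchange_big /=; apply: eq_bigr => x _.
  rewrite bigA_distr_big_dep; apply: eq_bigl => a; exact: FdQ.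
have cardFd : (#|Fd F p d|%:R : algC) = \prod_(i < d.+1) \sum_(b | Q i b) (1 : algC).
  rewrite bigA_distr_big_dep -sumr_const; apply: eq_big => [a|a _]; first by rewrite FdQ.
  by rewrite big1.
have perx : forall x : L r, \prod_(i < d.+1) \sum_(b | Q i b) G x i b =
    if Wp p n r x then #|Fd F p d|%:R else 0.
  move=> x; case: ifP => hW.
    rewrite cardFd; apply: eq_bigr => i _; apply: eq_bigr => b hb.
    rewrite /G; case: (eqVneq b 0) => [->|b0].
      by rewrite rmorph0 mul0r (psi_0 pr cL' wprim).
    have hpi : ~~ (p %| i)%N.
      move: hb; rewrite /Q => /andP [h1 _]; apply: contra b0 => hp.
      exact: (implyP h1 hp).
    have i0 : (0 < i)%N by rewrite lt0n; apply: contra hpi => /eqP ->; exact: dvdn0.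
    have hC := W_cond (iota r) pr cF cL i0 hW.
    by apply/eqP; rewrite (psi_eq1 pr cL' wprim); exact: (forallP hC b).
  have hnot : ~~ [forall i : 'I_d, (0 < i)%N ==> ~~ (p %| i)%N ==> Cond p (iota r) (x ^+ i)].
    apply/negP => /forallP H; move/negbT: hW => /negP; apply.
    apply: (V_sub_W (iota := iota r) pr cF cL r0 rd) => i /andP [i0 id] hp.
    by have := H (Ordinal id); rewrite /= i0 hp.
  move: hnot; rewrite negb_forall => /existsP [i].
  rewrite negb_imply => /andP [i0]; rewrite negb_imply => /andP [hp hC].
  set i' := widen_ord (leqnSn d) i.
  rewrite (bigD1 i') //=.
  have -> : \sum_(b | Q i' b) G x i' b = 0.
    have im : (i' == ord_max) = false.
      by apply/negbTE; rewrite -val_eqE /= neq_ltn ltn_ord.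
    rewrite (eq_bigl xpredT); last by move=> b; rewrite /Q /= (negbTE hp) im.
    by rewrite /G (charsum_F pr cL' wprim (iota r) (x ^+ i')) /= (negbTE hC).
  by rewrite mul0r.
have total : \sum_(a in Fd F p d) S a =
    #|Fd F p d|%:R * (#|[pred x : L r | Wp p n r x]|)%:R.
  rewrite sumS (eq_bigr _ (fun x _ => perx x)) -big_mkcond /= sumr_const.
  by rewrite mulr_natr.
have Fd0 : (#|Fd F p d|%:R : algC) != 0.
  rewrite pnatr_eq0 -lt0n; apply/card_gt0P.
  exists [ffun i : 'I_d.+1 => if i == ord_max then 1 else 0].
  rewrite /Fd inE ffunE eqxx oner_eq0 /=; apply/forallP => i; rewrite ffunE.
  apply/implyP => hpi; case: (eqVneq i ord_max) => [ei|]; last by rewrite eqxx.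
  exfalso.
  have : (p %| d)%N by move: hpi; rewrite ei.
  by move=> hpd; move: cop; rewrite coprime_sym prime_coprime // hpd.
rewrite (eq_bigr (fun a => - S a / sq ^+ r)); last by move=> a Ha; exact: hT.
rewrite -mulr_suml sumrN total (card_W pr cF cL r0).
have sqr0 : sq ^+ r != 0 by rewrite expf_neq0.
case: (boolP (p %| r)%N) => hpr /=.
  rewrite natrX -/q; move: Fd0 sqr0; set A := (#|Fd F p d|%:R : algC); set B := sq ^+ r.
  by move=> h1 h2; field; rewrite h1 h2.
move: Fd0 sqr0; set A := (#|Fd F p d|%:R : algC); set B := sq ^+ r.
by move=> h1 h2; field; rewrite h1 h2.
Qed.
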